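(* Let $n$ be an even positive integer, let $V_0=\{v\in\{-1,1\}^n : v_1=1,\ \sum_i v_i=0\}$, let $L\subset\mathbb{Z}^n$ be the lattice generated by $V_0$, let $P(V_0)=\{\sum_{v\in W}v : W\subseteq V_0\}$, and let $g(V_0)=\frac12\sum_{v\in V_0}v$. Let $R$ be a positive integer such that $\binom{n-2}{(n-2)/2}>4R(n-1)$. Then every $u\in L$ with $\|u-g(V_0)\|_\infty\le R-\frac n2$ satisfies $u\in P(V_0)$. *)

(* Defs.v *)
From mathcomp Require Import all_boot all_order all_algebra.
Set Implicit Arguments. Unset Strict Implicit. Unset Printing Implicit Defensive.
Import Order.TTheory GRing.Theory Num.Theory.
Local Open Scope ring_scope.

(* Sign vectors in {-1,1}^n are encoded by s : {ffun 'I_n -> bool},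
   true |-> 1, false |-> -1. Coordinates are indexed 0..n-1, so the
   paper's v_1 is the coordinate with index 0. *)
Definition sv (n : nat) (s : {ffun 'I_n -> bool}) (i : 'I_n) : int :=
  if s i then 1 else -1.

Definition V0 (n : nat) : {set {ffun 'I_n -> bool}} :=
  [set s : {ffun 'I_n -> bool} | [forall i : 'I_n, (val i == 0%N) ==> s i]
           && (\sum_(i < n) sv s i == 0)].

Definition in_lattice_V0 (n : nat) (u : 'I_n -> int) : Prop :=
  exists c : {ffun 'I_n -> bool} -> int,
    forall i : 'I_n, u i = \sum_(s in V0 n) c s * sv s i.

Definition in_P_V0 (n : nat) (u : 'I_n -> int) : Prop :=
  exists W : {set {ffun 'I_n -> bool}},
    W \subset V0 n /\ forall i : 'I_n, u i = \sum_(s in W) sv s i.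

Definition gV0 (n : nat) (i : 'I_n) : rat :=
  (1 / 2) * ((\sum_(s in V0 n) sv s i)%:~R).

(* Main.v *)
Require Import Defs.
From mathcomp Require Import all_boot all_order all_algebra.
From mathcomp Require Import fingroup perm.
From mathcomp Require Import zify ring lra.
From Stdlib Require Import Classical.
Import Order.TTheory GRing.Theory Num.Theory.
Local Open Scope ring_scope.

Lemma arith (n R a b k S beta ui : int) :
  4 <= n -> 0 < R -> 0 <= b -> 4 * R * (n - 1) < a ->
  (n - 1) * (b - a) = -(a+b) -> (n-1) * S = -(a+b) -> (n-2) * beta = -(2*b) ->
  a + b - 2*R + n <= 2*k -> 2*k <= a + b + 2*R - n -> S - 2*R + n <= 2*ui ->
  [/\ b <= k, k <= a + b & beta + 2 <= ui].
Proof.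
move=> n4 R0 b0 ha e1 e2 e3 k1 k2 hu.
have nb : n * b = (n - 2) * a by lia.
have e4 : (n - 1) * (n * S + 2 * a) = 0.
  have -> : (n - 1) * (n * S + 2 * a) = n * ((n-1) * S) + 2 * (n-1) * a by ring.
  rewrite e2; lia.
have nS : n * S = - (2 * a).
  move/eqP: e4; rewrite mulf_eq0 => /orP[/eqP|/eqP]; lia.
have e5 : (n - 2) * (n * beta + 2 * a) = 0.
  have -> : (n - 2) * (n * beta + 2 * a) = n * ((n-2) * beta) + 2 * (n-2) * a by ring.
  rewrite e3; lia.
have nB : n * beta = - (2 * a).
  move/eqP: e5; rewrite mulf_eq0 => /orP[/eqP|/eqP]; lia.
have SB : S = beta.
  apply: (@mulfI _ n); [apply/eqP; lia | by rewrite nS nB].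
have nab : n * (a - b) = 2 * a by lia.
have Rn : R * 4 <= R * n by apply: ler_wpM2l; lia.
split.
- case: (ltrP (2 * R) (a - b)) => [h|h]; first lia.
  have : n * (a - b) <= n * (2 * R) by apply: ler_wpM2l => //; lia.
  clear -nab ha Rn n4 R0; lia.
- case: (lerP 0 (a - b)) => [h|h]; first lia.
  have : n * (a - b) <= n * 0 by apply: ler_wpM2l => //; lia.
  clear -nab ha Rn n4 R0; nia.
- case: (lerP (S + 4) (n - 2 * R)) => [h|h]; first lia.
  have : n * (n - 2 * R) <= n * (S + 3) by apply: ler_wpM2l; lia.
  have Rn2 : R * n * 4 <= R * n * n by apply: ler_wpM2l; lia.
  clear -nS ha Rn Rn2 n4 R0; nia.
Qed.
Arguments arith {n R a b k S beta ui}.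


Lemma rat_bound (x y : int) (R n : nat) :
  `|x%:~R - 1/2 * y%:~R| <= R%:R - n%:R/2 :> rat ->
  (y - 2 * R%:Z + n%:Z <= 2 * x) /\ (2 * x <= y + 2 * R%:Z - n%:Z).
Proof.
rewrite ler_norml => /andP[h1 h2]; split; rewrite -(ler_int rat) !(rmorphD, rmorphB, rmorphM, rmorphN) /=.
all: lra.
Qed.
Arguments rat_bound {x y R n}.

Section Aux.
Variable n : nat.
Notation V := {ffun 'I_n -> bool}.

Definition Sm (W : {set V}) (l : 'I_n) : int := \sum_(t in W) sv t l.

Definition swp (i j : 'I_n) (t : V) : V :=
  [ffun l => if l == i then false else if l == j then true else t l].

Lemma sum_ind (T : finType) (W : {set T}) (b : pred T) :
  \sum_(t in W) (if b t then 1 else 0 : int) = #|[set t in W | b t]|%:Z.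
Proof.
rewrite -big_mkcondr /= -sum1dep_card -natz natr_sum; apply: eq_bigr => //.
Qed.

Lemma Sm_swap (W : {set V}) t s l : t \in W -> s \notin W ->
  Sm (s |: (W :\ t)) l = Sm W l - sv t l + sv s l.
Proof.
move=> tW sW; rewrite /Sm big_setU1 /=; last by rewrite !inE negb_and sW orbT.
rewrite [in RHS](big_setD1 t tW) /=; ring.
Qed.

Lemma card_swap (W : {set V}) t s : t \in W -> s \notin W ->
  #|s |: (W :\ t)| = #|W|.
Proof.
move=> tW sW; rewrite cardsU1 !inE negb_and sW orbT (cardsD1 t W) tW.
by [].
Qed.

Lemma sv_swp i j t l : sv (swp i j t) l =
  if l == i then -1 else if l == j then 1 else sv t l.
Proof. by rewrite /sv ffunE; case: (l == i) => //; case: (l == j). Qed.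

Lemma transfer (F W : {set V}) i j : i != j ->
  (forall t, t \in F -> t i -> ~~ t j -> swp i j t \in F) -> W \subset F ->
  Sm W j < Sm W i ->
  exists2 t, t \in W & [/\ t i, ~~ t j & swp i j t \notin W].
Proof.
move=> ij HF WF lt.
have [/exists_inP [t tW /and3P[ti tj ts]] | none] :=
  boolP [exists t in W, [&& t i, ~~ t j & swp i j t \notin W]]; first by exists t.
exfalso.
set X := [set t in W | t i && ~~ t j].
set Y := [set t in W | t j && ~~ t i].
have sub : swp i j @: X \subset Y.
  apply/subsetP => s /imsetP[t]; rewrite inE => /andP[tW /andP[ti tj]] ->.
  rewrite inE; apply/andP; split.
    move/exists_inPn: none => /(_ t tW); rewrite ti tj /= negbK //.
  by rewrite !ffunE eqxx eq_sym (negbTE ij) eqxx.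
have inj : {in X &, injective (swp i j)}.
  move=> t1 t2; rewrite !inE => /andP[_ /andP[t1i t1j]] /andP[_ /andP[t2i t2j]] E.
  apply/ffunP => l; move/ffunP: E => /(_ l); rewrite !ffunE.
  case: (eqVneq l i) => [-> _|li]; first by rewrite t1i t2i.
  case: (eqVneq l j) => [-> _|lj //]; by rewrite (negbTE t1j) (negbTE t2j).
have card : (#|X| <= #|Y|)%N by rewrite -(card_in_imset inj); apply: subset_leq_card.
have E : Sm W i - Sm W j = 2 * #|X|%:Z - 2 * #|Y|%:Z.
  rewrite -!sum_ind /Sm -sumrB !mulr_sumr -sumrB; apply: eq_bigr => t _.
  by rewrite /sv; case: (t i); case: (t j).
move: lt; rewrite -subr_gt0 E; lia.
Qed.
Arguments transfer {F W i j}.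

Lemma sum_change1 (P : pred 'I_n) (x y : 'I_n -> int) i :
  P i -> (forall l, P l -> l != i -> y l = x l) ->
  \sum_(l | P l) y l = \sum_(l | P l) x l - x i + y i.
Proof.
move=> Di H; rewrite (bigD1 i Di) [in RHS](bigD1 i Di) /=.
rewrite [X in _ = _ + X - _ + _](eq_bigr y); last by move=> l /andP[? ?]; rewrite H.
ring.
Qed.

Lemma sum_change2 (P : pred 'I_n) (x y : 'I_n -> int) i j : i != j ->
  P i -> P j -> (forall l, P l -> l != i -> l != j -> y l = x l) ->
  \sum_(l | P l) y l = \sum_(l | P l) x l - x i - x j + y i + y j.
Proof.
move=> ij Pi Pj H.
pose z l := if l == i then y i else x l.
have E1 : \sum_(l | P l) z l = \sum_(l | P l) x l - x i + z i.
  by apply: (@sum_change1 P x z i) => // l _ li; rewrite /z (negbTE li).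
have E2 : \sum_(l | P l) y l = \sum_(l | P l) z l - z j + y j.
  apply: (@sum_change1 P z y j) => // l Pl lj; rewrite /z; case: eqVneq => [->//|li].
  by rewrite H.
by rewrite E2 E1 /z eqxx eq_sym (negbTE ij); ring.
Qed.

Variable o0 : 'I_n.
Hypothesis h0 : val o0 = 0%N.

Lemma inV0 t : (t \in V0 n) = (t o0) && (\sum_i sv t i == 0).
Proof.
rewrite inE; congr andb; apply/forallP/idP => [H| to i].
  by have := H o0; rewrite h0 eqxx.
apply/implyP => /eqP e; have -> : i = o0 by apply: val_inj; rewrite /= e h0.
by [].
Qed.

Lemma nz_neq i : val i != 0%N -> i != o0.
Proof. by apply: contra => /eqP ->; rewrite h0. Qed.
Arguments nz_neq {i}.

Lemma swp_V0 i j t : val i != 0%N -> i != j -> t \in V0 n -> t i -> ~~ t j ->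
  swp i j t \in V0 n.
Proof.
move=> i0 ij; rewrite !inV0 => /andP[t0 /eqP ts] ti tj.
apply/andP; split.
  by rewrite ffunE eq_sym (negbTE (nz_neq i0)); case: (_ == _).
apply/eqP; rewrite (@sum_change2 xpredT (sv t) (sv (swp i j t)) i j) //.
  by rewrite ts !sv_swp eqxx eq_sym (negbTE ij) eqxx /sv ti (negbTE tj); ring.
by move=> l _ li lj; rewrite sv_swp (negbTE li) (negbTE lj).
Qed.

Definition tau (i j : 'I_n) (t : V) : V := [ffun l => t (tperm i j l)].

Lemma tauK i j : involutive (tau i j).
Proof. by move=> t; apply/ffunP => l; rewrite !ffunE tpermK. Qed.

Lemma Sm_sym (F : {set V}) i j : (forall t, t \in F -> tau i j t \in F) ->
  Sm F i = Sm F j.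
Proof.
move=> HF; rewrite /Sm (reindex_inj (can_inj (tauK i j))) /=.
apply: eq_big => [t|t _].
  apply/idP/idP => [/HF|]; first by rewrite tauK.
  exact: HF.
by rewrite /sv ffunE tpermL.
Qed.

Lemma tau_V0 i j t : val i != 0%N -> val j != 0%N -> t \in V0 n -> tau i j t \in V0 n.
Proof.
move=> i0 j0; rewrite !inV0 => /andP[t0 ts]; apply/andP; split.
  by rewrite ffunE tpermD //; apply: nz_neq.
rewrite (reindex_inj (can_inj (tpermK i j))) /=.
rewrite (eq_bigr (fun l => sv t l)) // => l _.
by rewrite /sv ffunE tpermK.
Qed.


Lemma neq0E i : (i != o0) = (val i != 0%N).
Proof. by rewrite -val_eqE /= h0. Qed.

Definition N0 := [set l : 'I_n | l != o0].
Definition Dc c := [set l : 'I_n | (l != o0) && (l != c)].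

Lemma sum_split0 (F : 'I_n -> int) : \sum_l F l = F o0 + \sum_(l in N0) F l.
Proof. by rewrite (bigD1 o0) //=; congr (_ + _); apply: eq_bigl => l; rewrite inE. Qed.

Lemma sum_splitc (F : 'I_n -> int) c : c != o0 ->
  \sum_(l in N0) F l = F c + \sum_(l in Dc c) F l.
Proof.
move=> c0; rewrite (bigD1 c) ?inE //=; congr (_ + _).
by apply: eq_bigl => l; rewrite !inE.
Qed.

Lemma card_N0 : #|N0| = n.-1.
Proof.
rewrite -[in RHS](card_ord n) -(cardsC1 o0); apply: eq_card => l; by rewrite !inE.
Qed.

Lemma card_Dc c : c != o0 -> #|Dc c| = n.-2.
Proof.
move=> c0; have := cardsD1 c N0; rewrite card_N0 inE c0 /= => ->.
rewrite add1n /=; apply: eq_card => l; rewrite !inE; by rewrite andbC.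
Qed.

Lemma sv0 t : t \in V0 n -> sv t o0 = 1.
Proof. by rewrite inV0 /sv => /andP[-> _]. Qed.
Arguments sv0 {t}.

Lemma sumN0_V t : t \in V0 n -> \sum_(l in N0) sv t l = -1.
Proof.
move=> tV; have := tV; rewrite inV0 => /andP[_ /eqP].
by rewrite sum_split0 sv0 // => /eqP; rewrite addrC addr_eq0 => /eqP.
Qed.

Lemma sumDc_V t c : t \in V0 n -> c != o0 ->
  \sum_(l in Dc c) sv t l = -1 - sv t c.
Proof.
by move=> tV c0; have := @sumN0_V t tV; rewrite (@sum_splitc _ c c0) => <-; ring.
Qed.

Lemma sum_const_eq (P : {set 'I_n}) (x : 'I_n -> int) i :
  (forall l, l \in P -> x l = x i) -> \sum_(l in P) x l = #|P|%:Z * x i.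
Proof. by move=> H; rewrite (eq_bigr _ H) sumr_const -mulr_natl natz. Qed.

Lemma Sm_N0 (F : {set V}) : F \subset V0 n -> \sum_(l in N0) Sm F l = - #|F|%:Z.
Proof.
move=> /subsetP FV; rewrite /Sm exchange_big /=.
rewrite (eq_bigr (fun _ => -1)); last by move=> t /FV; apply: sumN0_V.
by rewrite sumrN sumr_const natz.
Qed.

Arguments Sm_N0 {F}.

Lemma Sm_Dc (F : {set V}) c : F \subset V0 n -> c != o0 ->
  \sum_(l in Dc c) Sm F l = \sum_(t in F) (-1 - sv t c).
Proof.
move=> /subsetP FV c0; rewrite /Sm exchange_big /=.
by apply: eq_bigr => t /FV tV; apply: sumDc_V.
Qed.
Arguments Sm_Dc {F c}.

Lemma Sm_total (F : {set V}) : F \subset V0 n -> \sum_l Sm F l = 0.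
Proof.
move=> /subsetP FV; rewrite /Sm exchange_big /= big1 // => t /FV.
by rewrite inV0 => /andP[_ /eqP].
Qed.

Arguments Sm_total {F}.

Lemma Sm_o0 (F : {set V}) : F \subset V0 n -> Sm F o0 = #|F|%:Z.
Proof.
move=> /subsetP FV; rewrite /Sm (eq_bigr (fun _ => 1)); last by move=> t /FV; apply: sv0.
by rewrite sumr_const natz.
Qed.


Lemma card_A c p : c != o0 -> (2 * p + 2 = n)%N ->
  ('C(n.-2, p) <= #|[set t in V0 n | ~~ t c]|)%N.
Proof.
move=> c0 np; rewrite -(@card_Dc c c0) -cards_draws.
set Fam := [set S : {set 'I_n} | S \subset Dc c & #|S| == p].
pose mk (S : {set 'I_n}) : V := [ffun l => (l == o0) || (l \in S)].
have o0S (S : {set 'I_n}) : S \subset Dc c -> (o0 \in S) = false.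
  by move=> sD; apply/negbTE/negP => /(subsetP sD); rewrite inE eqxx.
have inj : {in Fam &, injective mk}.
  move=> S1 S2; rewrite !inE => /andP[s1 _] /andP[s2 _] E.
  apply/setP => l; move/ffunP: E => /(_ l); rewrite !ffunE.
  by case: (eqVneq l o0) => [->|_] //=; rewrite !o0S.
rewrite -(card_in_imset inj); apply: subset_leq_card; apply/subsetP => s /imsetP[S].
rewrite inE => /andP[sD /eqP cS] ->{s}.
rewrite inE; apply/andP; split; last first.
  rewrite ffunE (negbTE c0) /=; apply/negP => /(subsetP sD).
  by rewrite !inE eqxx andbF.
rewrite inV0 ffunE eqxx /=; apply/eqP.
rewrite sum_split0 /sv ffunE eqxx /=.
have E : \sum_(l in N0) (if mk S l then 1 else -1 : int) =
    \sum_(l in N0) ((2 : int) * (if l \in S then 1 else 0) - 1).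
  apply: eq_bigr => l; rewrite inE => /negbTE l0; rewrite ffunE l0 /=.
  by case: (l \in S).
rewrite E sumrB -mulr_sumr sum_ind sumr_const natz card_N0.
have -> : [set l in N0 | l \in S] = S.
  apply/setP => l; rewrite !inE; apply/andP/idP => [[]//|lS]; split=> //.
  by move: (subsetP sD l lS); rewrite !inE => /andP[].
rewrite cS; rewrite -np /=; lia.
Qed.


Lemma descent (T : Type) (P : T -> Prop) (Q : T -> int) (G : T -> Prop) :
  (forall X, P X -> 0 <= Q X) ->
  (forall X, P X -> ~ G X -> exists Y, P Y /\ Q Y < Q X) ->
  forall X, P X -> exists Y, P Y /\ G Y.
Proof.
move=> Q0 step X PX; have [m Hm] := ubnP (absz (Q X)).
elim: m X PX Hm => // m IH X PX Hm.
case: (classic (G X)) => [GX|nG]; first by exists X.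
have [Y [PY QY]] := step X PX nG.
apply: (IH Y PY); have := Q0 Y PY; have := Q0 X PX; lia.
Qed.

Lemma subset_card (T : finType) (A : {set T}) k : (k <= #|A|)%N ->
  exists2 X : {set T}, X \subset A & #|X| = k.
Proof.
elim: k => [|k IH] lek; first by exists set0; rewrite ?sub0set ?cards0.
have [X XA cX] := IH (ltnW lek).
have : (0 < #|A :\: X|)%N by rewrite cardsDS // cX subn_gt0.
rewrite card_gt0 => /set0Pn[x]; rewrite inE => /andP[xX xA].
exists (x |: X); first by rewrite subUset sub1set xA XA.
by rewrite cardsU1 xX cX.
Qed.


Lemma inDc c i : i \in Dc c -> [/\ i != o0, val i != 0%N & i != c].
Proof. by rewrite inE => /andP[i0 ic]; rewrite -neq0E. Qed.
Arguments inDc {c i}.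

Lemma Sm_swpE (X : {set V}) t i j l : t \in X -> swp i j t \notin X ->
  t i -> ~~ t j -> i != j ->
  Sm (swp i j t |: (X :\ t)) l =
  if l == i then Sm X l - 2 else if l == j then Sm X l + 2 else Sm X l.
Proof.
move=> tX sX ti tj ij; rewrite Sm_swap // sv_swp.
case: eqVneq => [->|li]; first by rewrite /sv ti; ring.
case: eqVneq => [->|lj]; first by rewrite /sv (negbTE tj); ring.
ring.
Qed.

Lemma phase1 c k' : c != o0 -> (k' <= #|[set t in V0 n | ~~ t c]|)%N ->
  exists X : {set V}, [/\ X \subset [set t in V0 n | ~~ t c], #|X| = k' &
    forall i, i \in Dc c -> Sm X i <= 2].
Proof.
move=> c0 kA.
set A := [set t in V0 n | ~~ t c].
have AV : A \subset V0 n by apply/subsetP => t; rewrite inE => /andP[].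
have [X0 X0A cX0] := @subset_card _ _ _ kA.
pose P (X : {set V}) := X \subset A /\ #|X| = k'.
pose Q (X : {set V}) : int := \sum_(l in Dc c) `|Sm X l|.
pose G (X : {set V}) := forall i, i \in Dc c -> Sm X i <= 2.
have [X [[XA cX] GX]] : exists Y, P Y /\ G Y; last by exists X.
apply: (@descent _ P Q G _ _ X0 (conj X0A cX0)).
  move=> X _; apply: sumr_ge0 => l _; exact: normr_ge0.
move=> X [XA cX] nG.
have [i iD li] : exists2 i, i \in Dc c & 2 < Sm X i.
  apply: NNPP => H; apply: nG => i iD; case: (lerP (Sm X i) 2) => // lt.
  by exfalso; apply: H; exists i.
have XV : X \subset V0 n := subset_trans XA AV.
have S0 : \sum_(l in Dc c) Sm X l = 0.
  rewrite (Sm_Dc XV c0) big1 // => t /(subsetP XA); rewrite inE => /andP[_ tc].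
  by rewrite /sv (negbTE tc); ring.
have [j jD lj] : exists2 j, j \in Dc c & Sm X j < 0.
  apply: NNPP => H.
  move: S0; rewrite (bigD1 i iD) /=; set r := (X in _ + X = _) => S0.
  have : 0 <= r.
    apply: sumr_ge0 => l /andP[lD _]; case: (ltrP (Sm X l) 0) => // ?.
    by exfalso; apply: H; exists l.
  lia.
have ij : i != j by apply/eqP => e; move: li; rewrite e; lia.
have [i0 i0' ic] := inDc iD; have [j0 j0' jc] := inDc jD.
have HF : forall t, t \in A -> t i -> ~~ t j -> swp i j t \in A.
  move=> t; rewrite inE => /andP[tV tc] ti tj; rewrite inE swp_V0 //=.
  by rewrite ffunE eq_sym (negbTE ic) eq_sym (negbTE jc).
have lij : Sm X j < Sm X i by clear -li lj; lia.
have [t tX [ti tj ts]] := transfer ij HF XA lij.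
exists (swp i j t |: (X :\ t)); split; first split.
- apply/subsetP => s; rewrite in_setU1 in_setD1 => /orP[/eqP->|/andP[_ sX]].
    by apply: HF => //; apply: (subsetP XA).
  exact: (subsetP XA).
- by rewrite card_swap.
rewrite /Q (@sum_change2 (fun l => l \in Dc c) (fun l => `|Sm X l|) _ i j) //.
  rewrite !Sm_swpE // eqxx eq_sym (negbTE ij) eqxx.
  have key : `|Sm X i - 2| + `|Sm X j + 2| < `|Sm X i| + `|Sm X j| by clear -li lj; lia.
  set S := \sum_(l in Dc c) _.
  have -> : S - `|Sm X i| - `|Sm X j| + `|Sm X i - 2| + `|Sm X j + 2| =
     S + ((`|Sm X i - 2| + `|Sm X j + 2|) - (`|Sm X i| + `|Sm X j|)) by ring.
  by rewrite gtrDl subr_lt0.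
by move=> l _ li' lj'; rewrite Sm_swpE // (negbTE li') (negbTE lj').
Qed.


Lemma Sm_par (W : {set V}) i :
  Sm W i = #|W|%:Z - 2 * #|[set t in W | ~~ t i]|%:Z.
Proof.
rewrite -sum_ind /Sm -sum1_card -natz natr_sum mulr_sumr -sumrB.
by apply: eq_bigr => t _; rewrite /sv; case: (t i).
Qed.

Lemma split_total (x : 'I_n -> int) c : c != o0 ->
  \sum_l x l = x o0 + x c + \sum_(l in Dc c) x l.
Proof. by move=> c0; rewrite sum_split0 (@sum_splitc _ c c0) addrA. Qed.

Lemma phase2 c (u : 'I_n -> int) (W0 : {set V}) :
  c != o0 ->
  \sum_l u l = 0 ->
  (forall i, exists z, u i = u o0 - 2 * z) ->
  (forall i, i != o0 -> u i <= u c) ->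
  W0 \subset V0 n -> #|W0|%:Z = u o0 ->
  (forall i, i \in Dc c -> Sm W0 i <= u i) ->
  exists W : {set V}, W \subset V0 n /\ forall i, Sm W i = u i.
Proof.
move=> c0 su par umax W0V cW0 HW0.
pose P (W : {set V}) := [/\ W \subset V0 n, #|W|%:Z = u o0 &
   forall i, i \in Dc c -> Sm W i <= u i].
pose Q (W : {set V}) : int := \sum_(l in Dc c) (u l - Sm W l).
pose G (W : {set V}) := forall i, i \in Dc c -> Sm W i = u i.
have [W [[WV cW HW] GW]] : exists W, P W /\ G W.
  apply: (@descent _ P Q G _ _ W0 (And3 W0V cW0 HW0)).
    move=> W [_ _ HW]; apply: sumr_ge0 => l lD; rewrite subr_ge0; exact: HW.
  move=> W [WV cW HW] nG.
  have [i iD li] : exists2 i, i \in Dc c & Sm W i < u i.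
    apply: NNPP => H; apply: nG => i iD; apply/eqP; rewrite eq_le HW //=.
    case: (leP (u i) (Sm W i)) => // lt; exfalso; apply: H; exists i => //.
  have li2 : Sm W i + 2 <= u i.
    have [z uz] := par i; move: li; rewrite uz Sm_par -cW.
    set m := (X in _ - 2 * X); clear -uz; lia.
  have Sc : u c <= Sm W c.
    have T1 := Sm_total WV; have T2 := su.
    rewrite (@split_total _ c c0) Sm_o0 // in T1.
    rewrite (@split_total _ c c0) in T2.
    have : \sum_(l in Dc c) Sm W l <= \sum_(l in Dc c) u l by apply: ler_sum.
    move: T1 T2 cW; set s1 := \sum_(l in Dc c) _; set s2 := \sum_(l in Dc c) _.
    clear; lia.
  have [i0 i0' ic] := inDc iD.
  have lci : Sm W i < Sm W c.
    have := umax i i0; clear -li Sc; lia.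
  have ci : c != i by rewrite eq_sym.
  have c0' : val c != 0%N by rewrite -neq0E.
  have HF : forall t, t \in V0 n -> t c -> ~~ t i -> swp c i t \in V0 n.
    by move=> t tV tc ti; apply: swp_V0.
  have [t tW [tc ti ts]] := transfer ci HF WV lci.
  have E l : l \in Dc c -> Sm (swp c i t |: (W :\ t)) l =
      if l == i then Sm W l + 2 else Sm W l.
    move=> lD; have [_ _ lc] := inDc lD.
    by rewrite Sm_swpE // (negbTE lc).
  exists (swp c i t |: (W :\ t)); split; first split.
  - apply/subsetP => s; rewrite in_setU1 in_setD1 => /orP[/eqP->|/andP[_ sX]].
      by apply: HF => //; apply: (subsetP WV).
    exact: (subsetP WV).
  - by rewrite card_swap.
  - by move=> l lD; rewrite E //; case: eqVneq => [->|_] //; apply: HW.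
  rewrite /Q (@sum_change1 (fun l => l \in Dc c) (fun l => u l - Sm W l) _ i) //.
    rewrite E // eqxx.
    set S := \sum_(l in Dc c) _.
    have -> : S - (u i - Sm W i) + (u i - (Sm W i + 2)) = S + (-2) by ring.
    by rewrite gtrDl.
  by move=> l lD li'; rewrite E // (negbTE li').
exists W; split => // l.
case: (eqVneq l o0) => [->|l0]; first by rewrite Sm_o0.
case: (eqVneq l c) => [->|lc]; last by apply: GW; rewrite inE l0 lc.
have T1 := Sm_total WV; have T2 := su.
rewrite (@split_total _ c c0) Sm_o0 // in T1.
rewrite (@split_total _ c c0) in T2.
have : \sum_(l in Dc c) Sm W l = \sum_(l in Dc c) u l by apply: eq_bigr.
move: T1 T2 cW; set s1 := \sum_(l in Dc c) _; set s2 := \sum_(l in Dc c) _.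
clear; lia.
Qed.


Lemma main_sec (R p : nat) : (0 < R)%N -> (4 <= n)%N -> (2 * p + 2 = n)%N ->
  (4 * R * (n - 1) < 'C(n - 2, p))%N ->
  forall u : 'I_n -> int, in_lattice_V0 u ->
  (forall i : 'I_n, `|(u i)%:~R - gV0 i| <= R%:R - n%:R / 2 :> rat) ->
  in_P_V0 u.
Proof.
move=> hR n4 np hbin u hu hdist.
have i1lt : (1 < n)%N by apply: leq_trans n4.
pose i1 := Ordinal i1lt.
have i1ne : i1 != o0 by rewrite neq0E.
have [c c0 cmax] : exists2 c, c != o0 & forall i, i != o0 -> u i <= u c.
  case: (@arg_maxP _ _ _ i1 (fun i => i != o0) u i1ne) => c c0 cm.
  by exists c => // i /cm.
have [cf hcf] := hu.
have su : \sum_l u l = 0.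
  rewrite (eq_bigr _ (fun l _ => hcf l)) exchange_big /= big1 // => s sV.
  by rewrite -mulr_sumr; move: sV; rewrite inV0 => /andP[_ /eqP ->]; rewrite mulr0.
have par : forall i, exists z, u i = u o0 - 2 * z.
  move=> i; exists (\sum_(s in V0 n) cf s * (if ~~ s i then 1 else 0)).
  rewrite !hcf mulr_sumr -sumrB; apply: eq_bigr => s sV; rewrite (sv0 sV) /sv.
  by case: (s i) => /=; ring.
set A := [set t in V0 n | ~~ t c].
set B := [set t in V0 n | t c].
have AV : A \subset V0 n by apply/subsetP => t; rewrite inE => /andP[].
have BV : B \subset V0 n by apply/subsetP => t; rewrite inE => /andP[].
have e1 : V0 n :&: [set t : V | t c] = B by apply/setP => t; rewrite /B !inE.
have e2 : V0 n :\: [set t : V | t c] = A by apply/setP => t; rewrite /A !inE andbC.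
have cardV : #|V0 n| = (#|A| + #|B|)%N.
  by rewrite -(cardsID [set t : V | t c] (V0 n)) e1 e2 addnC.
have SVc : Sm (V0 n) c = #|B|%:Z - #|A|%:Z.
  rewrite /Sm (big_setID [set t : V | t c]) /= e1 e2.
  have -> : \sum_(t in B) sv t c = #|B|%:Z.
    rewrite (eq_bigr (fun _ => 1)) ?sumr_const ?natz // => t.
    by rewrite inE => /andP[_ tc]; rewrite /sv tc.
  have -> : \sum_(t in A) sv t c = - #|A|%:Z.
    rewrite (eq_bigr (fun _ => -1)) ?sumrN ?sumr_const ?natz // => t.
    by rewrite inE => /andP[_ tc]; rewrite /sv (negbTE tc).
  by [].
have K1 : forall i, i != o0 -> (n%:Z - 1) * Sm (V0 n) i = - #|V0 n|%:Z.
  move=> i i0; rewrite -(Sm_N0 (subxx (V0 n))) (@sum_const_eq N0 _ i).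
    by rewrite card_N0 predn_int //; apply: leq_trans n4.
  move=> l; rewrite inE => l0; apply: Sm_sym => t tV; apply: tau_V0 => //.
    by rewrite -neq0E.
  by rewrite -neq0E.
have K2 : forall i, i \in Dc c -> (n%:Z - 2) * Sm B i = - (2 * #|B|%:Z).
  move=> i iD.
  have : \sum_(l in Dc c) Sm B l = - (2 * #|B|%:Z).
    rewrite (Sm_Dc BV c0) (eq_bigr (fun _ => -2)); last first.
      by move=> t; rewrite inE => /andP[_ tc]; rewrite /sv tc.
    by rewrite sumr_const -mulr_natl natz; ring.
  rewrite (@sum_const_eq (Dc c) _ i) => [|l lD]; last first.
    have [l0 l0' lc] := inDc lD; have [i0 i0' ic] := inDc iD.
    apply: Sm_sym => t; rewrite inE => /andP[tV tc]; rewrite inE tau_V0 //=.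
    by rewrite ffunE tpermD // eq_sym.
  rewrite card_Dc // => <-; congr (_ * _).
  have -> : n.-2 = (n - 2)%N by rewrite subn2.
  by rewrite subzn //; apply: leq_trans n4.
have n0 : (0 < n)%N by apply: leq_trans n4.
have [k1 k2] : (Sm (V0 n) o0 - 2 * R%:Z + n%:Z <= 2 * u o0) /\
    (2 * u o0 <= Sm (V0 n) o0 + 2 * R%:Z - n%:Z) := rat_bound (hdist o0).
rewrite Sm_o0 // cardV PoszD in k1 k2.
have haN : (4 * R * (n - 1) < #|A|)%N.
  by apply: (leq_trans hbin); rewrite subn2; apply: card_A.
have ha : 4 * R%:Z * (n%:Z - 1) < #|A|%:Z.
  move: haN; rewrite -ltz_nat PoszM PoszM subzn //.
have e1' : (n%:Z - 1) * (#|B|%:Z - #|A|%:Z) = - (#|A|%:Z + #|B|%:Z).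
  by rewrite -SVc K1 // cardV PoszD.
have [i2 i2D] : exists i2, i2 \in Dc c.
  have : (0 < #|Dc c|)%N by rewrite card_Dc // -subn2 subn_gt0; apply: leq_trans n4.
  by rewrite card_gt0 => /set0Pn.
have Gall : forall i, i \in Dc c ->
    [/\ #|B|%:Z <= u o0, u o0 <= #|A|%:Z + #|B|%:Z & Sm B i + 2 <= u i].
  move=> i iD; have [i0 i0' ic] := inDc iD.
  have [h1 h2] : (Sm (V0 n) i - 2 * R%:Z + n%:Z <= 2 * u i) /\
    (2 * u i <= Sm (V0 n) i + 2 * R%:Z - n%:Z) := rat_bound (hdist i).
  have n4' : 4 <= n%:Z by clear -n4; lia.
  have R0 : 0 < R%:Z by clear -hR; lia.
  have b0 : 0 <= #|B|%:Z by [].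
  have e2i : (n%:Z - 1) * Sm (V0 n) i = - (#|A|%:Z + #|B|%:Z).
    by rewrite K1 // cardV PoszD.
  exact: (arith n4' R0 b0 ha e1' e2i (K2 i iD) k1 k2 h1).
have [G1 G2 _] := Gall i2 i2D.
have [kN hk] : exists kN : nat, u o0 = kN%:Z.
  case E: (u o0) => [m|m]; first by exists m.
  by move: G1; rewrite E.
rewrite hk lez_nat in G1; rewrite hk -PoszD lez_nat in G2.
have kA : (kN - #|B| <= #|A|)%N by rewrite leq_subLR addnC.
have [X [XA cX HX]] := @phase1 c _ c0 kA.
have XV : X \subset V0 n := subset_trans XA AV.
have BX : B :&: X = set0.
  apply/setP => t; rewrite !inE; apply/negbTE/andP => [[tB tX]].
  by move: (subsetP XA t tX) tB; rewrite /A /B !inE => /andP[_ /negbTE ->] /andP[].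
have W0V : B :|: X \subset V0 n by rewrite subUset BV XV.
have cW0 : #|B :|: X|%:Z = u o0.
  by rewrite cardsU BX cards0 subn0 cX subnKC // hk.
have HW0 : forall i, i \in Dc c -> Sm (B :|: X) i <= u i.
  move=> i iD; have [_ _ G3] := Gall i iD.
  have -> : Sm (B :|: X) i = Sm B i + Sm X i.
    have f1 : (B :|: X) :&: B = B by rewrite setUK.
    have f2 : (B :|: X) :\: B = X.
      apply/setP => t; rewrite in_setD in_setU.
      case: (boolP (t \in B)) => tB /=; last by [].
      apply/esym/negP => tX; move/setP: BX => /(_ t).
      by rewrite in_setI tB tX in_set0.
    by rewrite /Sm (big_setID B) /= f1 f2.
  have := HX i iD; clear -G3; lia.
have [W [WV HW]] := @phase2 c u _ c0 su par cmax W0V cW0 HW0.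
by exists W; split => // i; rewrite -HW.
Qed.

End Aux.

Theorem lemma4p2 (n R : nat) (hn : (0 < n)%N) (hev : ~~ odd n) (hR : (0 < R)%N)
  (hbin : ('C(n - 2, (n - 2)./2) > 4 * R * (n - 1))%N)
  (u : 'I_n -> int) (hu : in_lattice_V0 u)
  (hdist : forall i : 'I_n, `|(u i)%:~R - gV0 i| <= R%:R - n%:R / 2 :> rat) :
  in_P_V0 u.
Proof.
have n1 : n != 1%N by apply/eqP => e; move: hev; rewrite e.
have n3 : n != 3%N by apply/eqP => e; move: hev; rewrite e.
have n2 : n != 2%N.
  apply/eqP => e; move: hbin; rewrite e /= bin0; clear -hR; lia.
have n4 : (4 <= n)%N by clear -hn n1 n2 n3; lia.
have np : (2 * (n - 2)./2 + 2 = n)%N.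
  have := odd_double_half (n - 2); rewrite oddB; last by apply: leq_trans n4.
  rewrite (negbTE hev) /= -muln2 add0n => E.
  by rewrite mulnC E subnK //; apply: leq_trans n4.
exact: (@main_sec n (Ordinal hn) erefl R _ hR n4 np hbin u hu hdist).
Qed.
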